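(* Let $G$ be an abelian Hausdorff topological group in which every cyclic subgroup is discrete. The following are equivalent: (i) $G$ contains an infinite absolutely Cauchy summable set; (ii) $G$ contains a subgroup topologically isomorphic to $S_A$ for some infinite subset $A$ of $G\setminus\{0\}$.
   Context: For $a\in G$, $\langle a\rangle$ is the cyclic subgroup generated by $a$ with the subspace topology. For $A\subseteq G\setminus\{0\}$, $S_A=\bigoplus_{a\in A}\langle a\rangle$ is the subgroup of finitely supported elements of the product $\prod_{a\in A}\langle a\rangle$, with the subspace topology of the Tychonoff product topology. $A\subseteq G$ is absolutely Cauchy summable if for every neighbourhood $U$ of $0$ there is a finite $F\subseteq A$ such that the subgroup generated by $A\setminus F$ is contained in $U$. *)

(* Defs.v *)
From HB Require Import structures.
From mathcomp Require Import all_boot all_order all_algebra.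
From mathcomp Require Import all_classical all_reals all_analysis.
Set Implicit Arguments. Unset Strict Implicit. Unset Printing Implicit Defensive.
Import Order.TTheory GRing.Theory Num.Theory.
Local Open Scope classical_set_scope.
Local Open Scope ring_scope.

Section Defs.
Variable G : topologicalZmodType.

Definition is_subgroup (H : set G) : Prop :=
  H 0 /\ (forall x y, H x -> H y -> H (x - y)).

Definition gen_subgroup (S : set G) : set G :=
  \bigcap_(H in [set H : set G | is_subgroup H /\ S `<=` H]) H.

Definition cyclic_subgroup (a : G) : set G := [set a *~ n | n in [set: int]].

Definition discrete_subspace (C : set G) : Prop :=
  forall x : subspace C, nbhs x = principal_filter x.

Definition abs_cauchy_summable (A : set G) : Prop :=
  forall U : set G, nbhs (0 : G) U ->
    exists F : set G, [/\ finite_set F, F `<=` A & gen_subgroup (A `\` F) `<=` U].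

Definition prodA (A : set G) := {ptws {a : G | A a} -> G}.

(* S_A : finitely supported elements of prod_{a in A} <a>, as a subset of prodA *)
Definition S_A (A : set G) : set (prodA A) :=
  [set f : prodA A | (forall i : {a : G | A a}, cyclic_subgroup (sval i) (f i))
                     /\ finite_set [set i | f i != 0]].

Arguments S_A : clear implicits.

(* G contains a subgroup topologically isomorphic to S_A:
   phi is an injective homomorphism S_A -> G which is a homeomorphism
   of S_A (subspace topology) onto its image H = phi @` S_A (subspace topology). *)
Definition contains_top_iso_copy_of_S_A (A : set G) : Prop :=
  exists (phi : prodA A -> G) (psi : G -> prodA A),
    [/\ forall f g, S_A A f -> S_A A g -> phi (fun i => f i - g i : G) = phi f - phi g,
        forall f, S_A A f -> psi (phi f) = f,
        {within S_A A, continuous phi} &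
        {within phi @` S_A A, continuous psi}].
End Defs.
Arguments S_A {G} A.

(* Main.v *)
Require Import Defs.
From HB Require Import structures.
From mathcomp Require Import all_boot all_order all_algebra.
From mathcomp Require Import all_classical all_reals all_analysis.
From Stdlib Require Import ClassicalEpsilon.
Import Order.TTheory GRing.Theory Num.Theory.
Local Open Scope classical_set_scope.
Local Open Scope ring_scope.
Lemma finite_inj (T U : Type) (A : set T) (f : T -> U) :
  (forall x y, A x -> A y -> f x = f y -> x = y) -> finite_set (f @` A) -> finite_set A.
Proof.
move=> fi fin.
have [[x0 Ax0]|nA] := pselect (exists x, A x); last first.
  apply: (@sub_finite_set _ _ set0); last exact: finite_set0.
  by move=> x Ax; apply: nA; exists x.
pose g y := epsilon (inhabits x0) (fun a => A a /\ f a = y).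
apply: (@sub_finite_set _ _ (g @` (f @` A))); last exact: finite_image.
move=> a Aa; exists (f a); first by exists a.
have [Ag fg] : A (g (f a)) /\ f (g (f a)) = f a.
  by apply: (epsilon_spec (inhabits x0) (fun a' => A a' /\ f a' = f a)); exists a.
exact: fi.
Qed.

Lemma nat_bound (X : set nat) : finite_set X -> exists n, forall j, X j -> (j < n)%N.
Proof.
move=> fX.
have : forall s : seq nat, exists n, forall j, j \in s -> (j < n)%N.
  elim=> [|a s [n hn]]; first by exists 0%N.
  exists (maxn a.+1 n) => j; rewrite inE => /orP[/eqP ->|js].
    by rewrite leq_max leqnn.
  by rewrite leq_max (hn j js) orbT.
move=> /(_ (finmap.enum_fset (fset_set X))) [n hn]; exists n => j Xj; apply: hn.
by rewrite in_fset_set // inE.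
Qed.

Section SumV.
Variable G : zmodType.
Lemma sum_vanish (c : nat -> G) n1 n2 :
  (forall j, (n1 <= j)%N -> c j = 0) -> (forall j, (n2 <= j)%N -> c j = 0) ->
  \sum_(j < n1) c j = \sum_(j < n2) c j.
Proof.
wlog le12 : n1 n2 / (n1 <= n2)%N.
  move=> h h1 h2; case: (leqP n1 n2) => [le|/ltnW le]; first exact: h.
  by symmetry; apply: h.
move=> h1 _; rewrite -!(big_mkord xpredT) (big_cat_nat (leq0n n1) le12) /=.
rewrite -[LHS]addr0; congr (_ + _); symmetry.
rewrite big_nat_cond big1 // => j /andP[/andP[hj _] _].
exact: h1.
Qed.
End SumV.
Section P0.
Variable G : topologicalZmodType.

Lemma trans1 (y : G) U : nbhs y U -> nbhs (0 : G) [set z | U (y + z)].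
Proof.
move=> Un.
have : (fun z => y + z) @ nbhs (0 : G) --> y + 0.
  apply: (@continuous_comp _ _ _ (fun z => (y, z)) (fun x : G * G => x.1 + x.2)).
    by apply: cvg_pair; [exact: cvg_cst|exact: cvg_id].
  exact: add_continuous.
by rewrite addr0 => /(_ U Un).
Qed.

Lemma trans2 (y : G) V : nbhs (0 : G) V -> nbhs y [set z | V (z - y)].
Proof.
move=> Vn.
have : (fun z => z - y) @ nbhs y --> y - y.
  apply: (@continuous_comp _ _ _ (fun z => (z, y)) (fun x : G * G => x.1 - x.2)).
    by apply: cvg_pair; [exact: cvg_id|exact: cvg_cst].
  exact: sub_continuous.
by rewrite subrr => /(_ V Vn).
Qed.

Lemma subV (W : set G) : nbhs (0 : G) W ->
  exists V, nbhs (0 : G) V /\ forall x y, V x -> V y -> W (x - y).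
Proof.
move=> Wn.
have : (fun x : G * G => x.1 - x.2) @ nbhs ((0 : G), (0 : G)) --> (0 : G) - 0.
  exact: (@sub_continuous G (0, 0)).
rewrite subrr => /(_ W Wn) [[P Q] /= [nP nQ] PQ].
exists (P `&` Q); split; first exact: filterI.
by move=> x y [Px _] [_ Qy]; apply: (PQ (x, y)).
Qed.

Lemma discP (a : G) : discrete_subspace (cyclic_subgroup a) ->
  forall x, cyclic_subgroup a x ->
  exists Z, nbhs x Z /\ forall y, Z y -> cyclic_subgroup a y -> y = x.
Proof.
move=> D x Cx.
have : nbhs (x : subspace (cyclic_subgroup a)) [set x].
  by rewrite D; apply/principal_filterP.
move/(nbhs_subspace_ex _ Cx) => -[Z Zn ZP].
exists Z; split => // y Zy Cy.
have : ([set x] `&` cyclic_subgroup a) y by rewrite ZP.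
by case.
Qed.

Lemma gen_sub (S H : set G) : is_subgroup H -> S `<=` H -> gen_subgroup S `<=` H.
Proof. by move=> HH SH x; apply; split. Qed.

Lemma gen_is (S : set G) : is_subgroup (gen_subgroup S).
Proof.
rewrite /is_subgroup /gen_subgroup; split.
  by move=> H /= [[H0 _] _].
move=> x y gx gy H /= [[H0 HB] SH]; have hH : is_subgroup H by split.
apply: HB; [exact: (gx H) | exact: (gy H)].
Qed.

Lemma gen_ext (S : set G) : S `<=` gen_subgroup S.
Proof. by move=> x Sx H [_]; apply. Qed.

Lemma sg_opp (H : set G) x : is_subgroup H -> H x -> H (- x).
Proof. by move=> [H0 HB] Hx; rewrite -sub0r; apply: HB. Qed.

Lemma sg_add (H : set G) x y : is_subgroup H -> H x -> H y -> H (x + y).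
Proof.
move=> HH Hx Hy; have Hn := @sg_opp H y HH Hy; rewrite -[y]opprK; case: HH => H0 HB; exact: HB.
Qed.

Lemma sg_mulrz (H : set G) x n : is_subgroup H -> H x -> H (x *~ n).
Proof.
move=> HH Hx.
have hn : forall k : nat, H (x *+ k).
  elim=> [|k IH]; first by rewrite mulr0n; case: HH.
  by rewrite mulrS; apply: sg_add.
case: n => k; first by rewrite /=; apply: hn.
rewrite NegzE mulrNz; apply: sg_opp => //; exact: hn.
Qed.

Lemma sg_cyc (H : set G) a y : is_subgroup H -> H a -> cyclic_subgroup a y -> H y.
Proof. by move=> HH Ha [n _ <-]; apply: sg_mulrz. Qed.

Lemma sg_sum (H : set G) (n : nat) (c : nat -> G) (P : pred nat) :
  is_subgroup H -> (forall j, P j -> H (c j)) -> H (\sum_(j < n | P j) c j).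
Proof.
move=> HH Hc; apply: (big_ind H) => //.
- by case: HH.
- by move=> x y; apply: sg_add.
- exact: Hc.

Qed.
End P0.
Section P1.
Variable G : topologicalZmodType.
Variable I : Type.

Lemma seq_choose (X : eqType) (Q : X -> I -> Prop) (s : seq X) :
  (forall E, E \in s -> exists i, Q E i) ->
  exists J : set I, finite_set J /\ forall E, E \in s -> exists2 i, J i & Q E i.
Proof.
elim: s => [|E s IH] h.
  by exists set0; split => // E.
have [|J [fJ hJ]] := IH.
  by move=> E' E's; apply: h; rewrite inE E's orbT.
have [i0 Qi0] := h E (mem_head _ _).
exists (J `|` [set i0]); split; first by rewrite finite_setU; split.
move=> E'; rewrite inE => /orP[/eqP ->|E's]; first by exists i0 => //; right.
by have [i Ji Qi] := hJ E' E's; exists i => //; left.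
Qed.

Lemma box (f : {ptws I -> G}) (P : set {ptws I -> G}) : nbhs f P ->
  exists J : set I, finite_set J /\ forall g : {ptws I -> G}, (forall i, J i -> g i = f i) -> P g.
Proof.
rewrite nbhsE => -[U1 [oU Uf] UP].
move: oU => [B sB eqU]; rewrite -eqU in Uf; case: Uf => C BC Cf.
have [D sD IDeC] := sB _ BC.
have [|J [fJ hJ]] := @seq_choose _ (fun E i => exists2 O : set G, open O &
      E = (fun g : {ptws I -> G} => g i) @^-1` O) (finmap.enum_fset D).
  move=> E ED; have := sD E ED.
  by move=> /set_mem [i _ [Os oO eO]]; exists i, Os => //; rewrite eO.
exists J; split => // g gJ; apply: UP; rewrite -eqU; exists C; first exact: BC.
suff : C g by [].
rewrite -IDeC => E ED.
have [i Ji [Os oO eE]] := hJ E ED.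
have fC : C f by [].
rewrite -IDeC in fC; have := fC E ED.
by rewrite eE /= -(gJ i Ji).
Qed.
End P1.
Section P2.
Variable G : topologicalZmodType.
Variable I : Type.

Lemma projC (i : I) (f : {ptws I -> G}) :
  (fun g : {ptws I -> G} => g i) @ nbhs f --> f i.
Proof.
have /cvg_sup/(_ i) h : nbhs f --> f by apply: cvg_id.
apply: cvg_trans (cvg_app _ h) _.
exact: (@initial_continuous _ G (fun g : {ptws I -> G} => g i)).
Qed.

Lemma ptwsP (F : set_system {ptws I -> G}) (f : {ptws I -> G}) : Filter F ->
  (forall i, (fun g : {ptws I -> G} => g i) @ F --> f i) -> F --> f.
Proof.
move=> FF h; apply/cvg_sup => i B.
rewrite (@nbhsE (initial_topology (fun g : {ptws I -> G} => g i)) f) => -[U1 [oU Uf] UB].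
case: oU => C oC CO.
apply: filterS UB _.
rewrite -CO.
apply: (h i); apply: open_nbhs_nbhs; split => //.
by rewrite -CO in Uf.
Qed.
End P2.

Lemma nbhs_finI (T : topologicalType) (x : T) (Q : nat -> set T) N :
  (forall j, (j < N)%N -> nbhs x (Q j)) -> nbhs x [set y | forall j, (j < N)%N -> Q j y].
Proof.
elim: N => [|N IH] h.
  by apply: nearW => y j.
have : nbhs x ([set y | forall j, (j < N)%N -> Q j y] `&` Q N).
  apply: filterI; first by apply: IH => j jN; apply: h; exact: ltnW.
  exact: h.
apply: filterS => y [hy hN] j; rewrite ltnS leq_eqVlt => /orP[/eqP -> //|].
exact: hy.
Qed.

Section Embed.
Local Set Implicit Arguments.
Local Unset Strict Implicit.
Variable G : topologicalZmodType.
Variable b : nat -> G.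
Hypothesis bi : injective b.
Hypothesis b0 : forall j, b j != 0.
Hypothesis D : forall a : G, discrete_subspace (cyclic_subgroup a).
Hypothesis P1 : forall k, exists2 V : set G, nbhs (0 : G) V &
  forall (c : nat -> G) m, (k <= m)%N -> (forall j, cyclic_subgroup (b j) (c j)) ->
    V (\sum_(j < m) c j) -> forall j, (j < k)%N -> c j = 0.
Hypothesis C0 : forall U : set G, nbhs (0 : G) U -> exists N, forall (c : nat -> G) m,
  (forall j, cyclic_subgroup (b j) (c j)) -> (forall j, (j < N)%N -> c j = 0) ->
  U (\sum_(j < m) c j).

Lemma cyc_sub (a x y : G) : cyclic_subgroup a x -> cyclic_subgroup a y ->
  cyclic_subgroup a (x - y).
Proof. by move=> [n _ <-] [m _ <-]; exists (n - m) => //; rewrite mulrzBr. Qed.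

Lemma cyc0 (a : G) : cyclic_subgroup a 0.
Proof. by exists 0 => //; rewrite mulr0z. Qed.

Let A : set G := range b.
Let I := {a : G | A a}.
Definition idx (j : nat) : I := exist _ (b j) (imageT b j).
Let coef (f : prodA A) j := f (idx j).

Lemma idx_surj (i : I) : exists j, i = idx j.
Proof.
case: i => x px; have [j _ bj] := px; exists j; subst x.
by rewrite /idx; congr exist; apply: Prop_irrelevance.
Qed.

Lemma idx_inj : injective idx.
Proof. by move=> j j' /(congr1 sval) /= /bi. Qed.

Definition bnd (f : prodA A) : nat :=
  epsilon (inhabits 0%N) (fun n => forall j, (n <= j)%N -> f (idx j) = 0).

Definition phi (f : prodA A) : G := \sum_(j < bnd f) f (idx j).

Lemma phiE f m : (forall j, (m <= j)%N -> f (idx j) = 0) ->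
  phi f = \sum_(j < m) f (idx j).
Proof.
move=> hm; rewrite /phi; apply: (@sum_vanish _ (fun j => f (idx j))) => //.
by apply: (epsilon_spec (inhabits 0%N) (fun n => forall j, (n <= j)%N -> f (idx j) = 0)); exists m.
Qed.

Lemma SA_bound f : S_A A f -> exists m, forall j, (m <= j)%N -> f (idx j) = 0.
Proof.
move=> [_ fin].
have : finite_set [set j | f (idx j) != 0].
  apply: (@finite_inj _ _ _ idx); first by move=> x y _ _; apply: idx_inj.
  by apply: sub_finite_set fin => i [j /= h <-].
move/nat_bound => [m hm]; exists m => j mj.
apply/eqP; apply: contraTT mj => h; rewrite -ltnNge; exact: hm.
Qed.

Lemma SA_coef f : S_A A f -> forall j, cyclic_subgroup (b j) (f (idx j)).
Proof. by move=> [h _] j; apply: (h (idx j)). Qed.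


Lemma phi_hom f g : S_A A f -> S_A A g ->
  phi (fun i => f i - g i : G) = phi f - phi g.
Proof.
move=> Sf Sg; have [m1 h1] := SA_bound Sf; have [m2 h2] := SA_bound Sg.
rewrite (phiE (m := maxn m1 m2)); last first.
  by move=> j; rewrite geq_max => /andP[j1 j2]; rewrite h1 // h2 // subr0.
rewrite (phiE (m := maxn m1 m2) (f := f)); last first.
  by move=> j; rewrite geq_max => /andP[j1 j2]; rewrite h1.
rewrite (phiE (m := maxn m1 m2) (f := g)); last first.
  by move=> j; rewrite geq_max => /andP[j1 j2]; rewrite h2.
by rewrite sumrB.
Qed.

Lemma SA_sub f g : S_A A f -> S_A A g -> forall j, cyclic_subgroup (b j) (f (idx j) - g (idx j)).
Proof. by move=> Sf Sg j; apply: cyc_sub; apply: SA_coef. Qed.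

Lemma diff_small k : exists2 V : set G, nbhs (0 : G) V &
  forall f g, S_A A f -> S_A A g ->
  V (phi f - phi g) -> forall j, (j < k)%N -> f (idx j) = g (idx j).
Proof.
have [V Vn hV] := P1 k; exists V => // f g Sf Sg Vd j jk.
have [m1 h1] := SA_bound Sf; have [m2 h2] := SA_bound Sg.
apply/eqP; rewrite -subr_eq0; apply/eqP.
apply: (hV (fun j => f (idx j) - g (idx j)) (maxn k (maxn m1 m2))) => //.
- by rewrite leq_max leqnn.
- exact: SA_sub.
- rewrite -(phiE (f := fun i => f i - g i)) ?phi_hom //.
  by move=> j'; rewrite !geq_max => /and3P[_ j1 j2]; rewrite h1 // h2 // subr0.
Qed.

Lemma phi_inj f g : S_A A f -> S_A A g -> phi f = phi g -> f = g.
Proof.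
move=> Sf Sg e; apply: functional_extensionality_dep => i.
have [j ->] := idx_surj i.
have [V Vn hV] := diff_small j.+1; apply: (hV _ _ Sf Sg _ j (ltnSn j)).
by rewrite e subrr; apply: nbhs_singleton.
Qed.

Definition psi (y : G) : prodA A :=
  epsilon (inhabits (fun _ => 0 : G)) (fun f => S_A A f /\ phi f = y).

Lemma psi_phi f : S_A A f -> psi (phi f) = f.
Proof.
move=> Sf.
have [Sp ep] : S_A A (psi (phi f)) /\ phi (psi (phi f)) = phi f.
  by apply: (epsilon_spec (inhabits (fun _ => 0 : G)) (fun g => S_A A g /\ phi g = phi f)); exists f.
exact: phi_inj.
Qed.


Lemma phi_cont : {within S_A A, continuous phi}.
Proof.
apply/subspace_continuousP => f Sf U Un.
have U1n := @trans1 G (phi f) U Un.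
have [N hN] := C0 U1n.
have hZ : forall j, exists Z, nbhs (f (idx j)) Z /\
    forall y, Z y -> cyclic_subgroup (b j) y -> y = f (idx j).
  by move=> j; exact: (@discP G (b j) (@D (b j)) _ (SA_coef Sf j)).
have [Z hZ2] := boolp.choice hZ.
have box : nbhs f [set g : prodA A | forall j, (j < N)%N -> Z j (g (idx j))].
  apply: nbhs_finI => j _.
  exact: (@projC G I (idx j) f (Z j) (proj1 (hZ2 j))).
apply: filterS box => g gZ Sg /=.
have [m1 h1] := SA_bound Sf; have [m2 h2] := SA_bound Sg.
have : [set z | U (phi f + z)] (phi g - phi f).
  rewrite -phi_hom // (phiE (f := fun i => g i - f i) (m := maxn m1 m2)); last first.
    by move=> j; rewrite geq_max => /andP[j1 j2]; rewrite h1 // h2 // subr0.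
  apply: (hN (fun j => g (idx j) - f (idx j))); first exact: SA_sub.
  move=> j jN; apply/eqP; rewrite subr_eq0; apply/eqP.
  by apply: (proj2 (hZ2 j)) => //; [exact: gZ | exact: SA_coef].
by rewrite /= addrC subrK.
Qed.

Lemma psi_cont : {within phi @` S_A A, continuous psi}.
Proof.
apply/subspace_continuousP => y [f Sf <-]; rewrite /from_subspace psi_phi //.
apply: ptwsP => i; have [j ->] := idx_surj i.
move=> U Un.
have [V Vn hV] := diff_small j.+1.
apply: filterS (@trans2 G (phi f) V Vn) => z Vz [g Sg gz] /=.
rewrite -gz psi_phi //; rewrite -gz in Vz.
rewrite (hV g f Sg Sf Vz j (ltnSn j)).
exact: nbhs_singleton.
Qed.

Lemma embed : contains_top_iso_copy_of_S_A A.
Proof.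
exists phi, psi; split.
- exact: phi_hom.
- exact: psi_phi.
- exact: phi_cont.
- exact: psi_cont.
Qed.

End Embed.

Section Construct.
Variable G : topologicalZmodType.
Hypothesis D : forall a : G, discrete_subspace (cyclic_subgroup a).
Variable B : set G.
Hypothesis Binf : infinite_set B.
Hypothesis acs : abs_cauchy_summable B.

Lemma cyc0' (a : G) : cyclic_subgroup a 0.
Proof. by exists 0 => //; rewrite mulr0z. Qed.

Definition Ind (bl : seq G) (W : set G) : Prop :=
  forall c : nat -> G, (forall j, (j < size bl)%N -> cyclic_subgroup (nth 0 bl j) (c j)) ->
  W (\sum_(j < size bl) c j) -> forall j, (j < size bl)%N -> c j = 0.

Definition State := (seq G * set G * set G)%type.

Definition Inv (s : State) : Prop :=
  [/\ finite_set s.1.2, nbhs (0 : G) s.2, (forall x, x \in s.1.1 -> s.1.2 x) & Ind s.1.1 s.2].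

Definition Ext (s s' : State) : Prop := exists x V F,
  [/\ s'.1.1 = rcons s.1.1 x, s'.1.2 = s.1.2 `|` F `|` [set x], s'.2 `<=` V,
      (forall u v, V u -> V v -> s.2 (u - v)) &
      [/\ finite_set F, gen_subgroup (B `\` F) `<=` V, B x, ~ (s.1.2 `|` F) x & x != 0]].

Lemma step (s : State) : Inv s -> exists s', Inv s' /\ Ext s s'.
Proof.
case: s => [[bl Fa] W] [/= fFa Wn blFa IndW].
have [V [Vn VW]] := @subV _ _ Wn.
have [F [fF FB gF]] := acs _ Vn.
have [x [Bx nx]] : exists x, B x /\ ~ (Fa `|` F `|` [set 0]) x.
  apply: contrapT => hn; apply: Binf.
  apply: (@sub_finite_set _ _ (Fa `|` F `|` [set 0])).
    move=> x Bx; apply: contrapT => nx; apply: hn; by exists x.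
  by rewrite !finite_setU; split; [split|exact: finite_set1].
have [Z [Zn hZ]] := @discP _ x (D x) 0 (cyc0' x).
have x0 : x != 0 by apply/eqP => e; apply: nx; right.
have nxF : ~ (Fa `|` F) x by move=> h; apply: nx; left.
exists (rcons bl x, Fa `|` F `|` [set x], V `&` Z); split; last first.
  by exists x, V, F; split => //= u [].
split => /=.
- by rewrite !finite_setU; split; [split|exact: finite_set1].
- exact: filterI.
- move=> y; rewrite mem_rcons inE => /orP[/eqP ->|/blFa]; [by right|by left; left].
- move=> c hc [Vs Zs] j.
  rewrite size_rcons big_ord_recr /= in Vs Zs.
  have cx : cyclic_subgroup x (c (size bl)).
    by have := hc (size bl); rewrite size_rcons nth_rcons ltnn eqxx; apply.
  have cV : V (c (size bl)).
    apply: gF; apply: (@sg_cyc _ _ x _ (gen_is _ _) _ cx); apply: gen_ext; split => //.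
    by move=> Fx; apply: nxF; right.
  have head0 : forall j, (j < size bl)%N -> c j = 0.
    apply: IndW.
      by move=> j' j'l; have := hc j'; rewrite size_rcons nth_rcons j'l; apply; exact: ltnW.
    by have := VW _ _ Vs cV; rewrite addrK.
  have cs0 : c (size bl) = 0.
    apply: hZ => //; move: Zs; rewrite big1 ?add0r // => i _; exact: head0.
  rewrite size_rcons ltnS leq_eqVlt => /orP[/eqP -> //|]; exact: head0.
Qed.


Lemma construct : exists b : nat -> G,
  [/\ injective b, forall j, B (b j), forall j, b j != 0 &
  forall k, exists2 V : set G, nbhs (0 : G) V &
  forall (c : nat -> G) m, (k <= m)%N -> (forall j, cyclic_subgroup (b j) (c j)) ->
    V (\sum_(j < m) c j) -> forall j, (j < k)%N -> c j = 0].
Proof.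
have hstep : forall s : State, exists s', Inv s -> Inv s' /\ Ext s s'.
  move=> s; case: (pselect (Inv s)) => [/step [s' h]|n]; first by exists s'.
  by exists s.
have [f hf] := boolp.choice hstep.
pose st n := iter n f ([::], set0, setT).
have Inv_st : forall n, Inv (st n).
  elim=> [|n IH]; last exact: (hf (st n) IH).1.
  split => /=; [exact: finite_set0 | exact: filterT | by [] | by move=> c _ _ j].
have Ext_st : forall n, Ext (st n) (st n.+1) by move=> n; exact: (hf (st n) (Inv_st n)).2.
have size_st : forall n, size (st n).1.1 = n.
  elim=> [//|n IH]; have [x [V [F [e1 _ _ _ _]]]] := Ext_st n.
  by rewrite e1 size_rcons IH.
pose b j := nth 0 (st j.+1).1.1 j.
have nth_st : forall n j, (j < n)%N -> nth 0 (st n).1.1 j = b j.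
  elim=> [//|n IH] j; rewrite ltnS leq_eqVlt => /orP[/eqP -> //|jn].
  have [x [V [F [e1 _ _ _ _]]]] := Ext_st n.
  by rewrite e1 nth_rcons size_st jn IH.
have mono : forall n m, (n <= m)%N -> (st n).1.2 `<=` (st m).1.2.
  move=> n; elim=> [|m IH]; first by rewrite leqn0 => /eqP ->.
  rewrite leq_eqVlt => /orP[/eqP -> //|]; rewrite ltnS => /IH nm.
  have [x [V [F [_ e2 _ _ _]]]] := Ext_st m.
  by move=> y /nm h; rewrite e2; left; left.
have facts : forall k, exists V F, [/\ (st k.+1).2 `<=` V,
    (forall u v, V u -> V v -> (st k).2 (u - v)), gen_subgroup (B `\` F) `<=` V,
    F `<=` (st k.+1).1.2 &
    [/\ (st k.+1).1.2 (b k), B (b k), ~ ((st k).1.2 `|` F) (b k) & b k != 0]].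
  move=> k; have [x [V [F [e1 e2 e3 e4 [fF gF Bx nx x0]]]]] := Ext_st k.
  have xb : x = b k by rewrite /b e1 nth_rcons size_st ltnn eqxx.
  rewrite -xb; exists V, F; split => //.
    by rewrite e2 => y Fy; left; right.
  by split => //; rewrite e2; right.
have notin : forall j k, (k <= j)%N -> ~ (st k).1.2 (b j).
  move=> j k kj; have [V' [F' [_ _ _ _ [_ _ nF _]]]] := facts j.
  by move=> /(mono _ _ kj) h; apply: nF; left.
exists b; split.
- move=> j j' e; apply/eqP; apply: contrapT => /negP ne.
  wlog lt : j j' e ne / (j < j')%N.
    move=> h; case: (ltngtP j j') => [l|l|l]; first exact: (h j j').
      by apply: (h j' j) => //; rewrite eq_sym.
    by move: ne; rewrite l eqxx.
  have [V' [F' [_ _ _ _ [inF _ _ _]]]] := facts j.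
  by apply: (notin j' j.+1 lt); rewrite -e.
- by move=> j; have [V' [F' [_ _ _ _ [_ Bb _ _]]]] := facts j.
- by move=> j; have [V' [F' [_ _ _ _ [_ _ _ b0]]]] := facts j.
move=> k; have [_ Wn _ _] := Inv_st k.+1.
exists (st k.+1).2 => // c m km hc Ws.
have [V [F [e3 e4 gF FFa [_ _ nFk _]]]] := facts k.
have [_ _ _ IndW] := Inv_st k.
have split_sum : \sum_(j < m) c j = \sum_(j < k) c j + \sum_(k <= j < m) c j.
  by rewrite -!(big_mkord xpredT) (big_cat_nat (leq0n k) km).
have tailV : V (\sum_(k <= j < m) c j).
  apply: gF; rewrite big_nat_cond; apply: (big_ind (gen_subgroup (B `\` F))).
  - by case: (gen_is G (B `\` F)).
  - by move=> u v; apply: sg_add; exact: gen_is.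
  move=> j /andP[/andP[kj _] _]; apply: (@sg_cyc _ _ (b j) _ (gen_is _ _) _ (hc j)).
  apply: gen_ext; split; first by have [V' [F' [_ _ _ _ [_ Bb _ _]]]] := facts j.
  move=> Fb; move: kj; rewrite leq_eqVlt => /orP[/eqP kj|kj].
    by subst j; apply: nFk; right.
  have [V' [F' [_ _ _ _ [_ _ nF _]]]] := facts j.
  by apply: nF; left; apply: (mono k.+1 j kj); apply: FFa.
have headW : (st k).2 (\sum_(j < k) c j).
  have := e4 _ _ (e3 _ Ws) tailV; rewrite split_sum addrK //.
move: IndW; rewrite /Ind size_st => IndW.
apply: IndW => // j jk; rewrite nth_st //; exact: hc.
Qed.

End Construct.

Lemma C0_of (G : topologicalZmodType) (B : set G) (b : nat -> G) :
  injective b -> (forall j, B (b j)) -> abs_cauchy_summable B ->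
  forall U : set G, nbhs (0 : G) U -> exists N, forall (c : nat -> G) m,
  (forall j, cyclic_subgroup (b j) (c j)) -> (forall j, (j < N)%N -> c j = 0) ->
  U (\sum_(j < m) c j).
Proof.
move=> bi bB acs U Un; have [F [fF FB gF]] := acs _ Un.
have : finite_set [set j | F (b j)].
  apply: (@finite_inj _ _ _ b); first by move=> x y _ _; apply: bi.
  by apply: sub_finite_set fF => y [j Fj <-].
move/nat_bound => [N hN]; exists N => c m hc h0.
apply: gF; apply: (big_ind (gen_subgroup (B `\` F))).
- by case: (gen_is G (B `\` F)).
- by move=> u v; apply: sg_add; exact: gen_is.
move=> j _; case: (ltnP j N) => jN; first by rewrite h0 //; case: (gen_is G (B `\` F)).
apply: (@sg_cyc _ _ (b j) _ (gen_is _ _) _ (hc j)).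
apply: gen_ext; split => // Fb; have := hN _ Fb; by rewrite ltnNge jN.
Qed.

Lemma infinite_range (T : Type) (b : nat -> T) : injective b -> infinite_set (range b).
Proof.
move=> bi fin; apply: infinite_nat.
apply: (@finite_inj _ _ _ b) => //; by move=> x y _ _; apply: bi.
Qed.

Theorem dirA (G : topologicalZmodType) :
  (forall a : G, discrete_subspace (cyclic_subgroup a)) ->
  (exists A : set G, infinite_set A /\ abs_cauchy_summable A) ->
  (exists A : set G, [/\ infinite_set A, A `<=` ~` [set 0] &
                          contains_top_iso_copy_of_S_A A]).
Proof.
move=> D [B [Binf acs]].
have [b [bi bB b0 P1]] := @construct G D B Binf acs.
exists (range b); split.
- exact: infinite_range.
- by move=> x [j _ <-] /eqP; apply/negP.
- apply: (embed bi D P1).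
  exact: C0_of bi bB acs.
Qed.

Theorem dirB (G : topologicalZmodType) :
  (exists A : set G, [/\ infinite_set A, A `<=` ~` [set 0] &
                          contains_top_iso_copy_of_S_A A]) ->
  (exists A : set G, infinite_set A /\ abs_cauchy_summable A).
Proof.
move=> [A [Ainf A0 [phi [psi [hom inv phic psic]]]]].
pose z : prodA A := fun _ => 0.
pose e (a : G) : prodA A := fun i => if sval i == a then a else 0.
have cyc0 : forall a : G, cyclic_subgroup a 0 by move=> a; exists 0 => //; rewrite mulr0z.
have Sz : S_A A z.
  split => [i|]; first exact: cyc0.
  by apply: (@sub_finite_set _ _ set0); [move=> i /=; rewrite eqxx | exact: finite_set0].
have eS : forall a, A a -> S_A A (e a).
  move=> a Aa; split => [i|].
    rewrite /e; case: eqP => [<-|_]; last exact: cyc0.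
    by exists 1 => //; rewrite mulr1z.
  apply: (@sub_finite_set _ _ [set exist _ a Aa]); last exact: finite_set1.
  move=> [x px]; rewrite /= /e /=; case: (eqVneq x a) => [xa _|nxa]; last by rewrite eqxx.
  by subst x; congr exist; apply: Prop_irrelevance.
have SAsub : forall f g, S_A A f -> S_A A g -> S_A A (fun i => f i - g i).
  move=> f g [cf ff] [cg fg]; split => [i|].
    by have [n _ <-] := cf i; have [m _ <-] := cg i; exists (n - m) => //; rewrite mulrzBr.
  apply: (@sub_finite_set _ _ ([set i | f i != 0] `|` [set i | g i != 0])).
    move=> i /= h; case: (eqVneq (f i) 0) => [f0|]; last by left.
    by right; apply: contraNneq h => ->; rewrite f0 subr0.
  by rewrite finite_setU.
have phi0 : phi z = 0.
  have := hom z z Sz Sz; rewrite subrr => <-; congr phi.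
  by apply: functional_extensionality_dep => i; rewrite /z subrr.
have einj : forall a a', A a -> A a' -> phi (e a) = phi (e a') -> a = a'.
  move=> a a' Aa Aa' h.
  have e1 := inv _ (eS a Aa); have e2 := inv _ (eS a' Aa').
  have := congr1 psi h; rewrite e1 e2 => /(congr1 (fun f : prodA A => f (exist _ a Aa))).
  rewrite /e /= eqxx; case: eqP => // _ a00.
  by exfalso; apply: (A0 a Aa); rewrite a00.
exists [set phi (e a) | a in A]; split.
  move=> fin; apply: Ainf; apply: (@finite_inj _ _ _ (fun a => phi (e a))) => //.
move=> U Un.
have := (subspace_continuousP _ _).1 phic z Sz U; rewrite /from_subspace /= phi0 => /(_ Un) hz.
have [J [fJ hJ]] := @box G _ z _ hz.
exists [set phi (e (sval i)) | i in J]; split.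
- exact: finite_image.
- by move=> y [i _ <-]; exists (sval i) => //; exact: (svalP i).
pose K := [set y | exists f, [/\ S_A A f, forall i, J i -> f i = 0 & phi f = y]].
have Ksg : is_subgroup K.
  split; first by exists z; split.
  move=> _ _ [f [Sf fJ0 <-]] [g [Sg gJ0 <-]].
  exists (fun i => f i - g i); split; [exact: SAsub | | exact: hom].
  by move=> i Ji; rewrite fJ0 // gJ0 // subr0.
have KU : K `<=` U.
  by move=> y [f [Sf fJ0 <-]]; apply: (hJ f) => // i Ji; rewrite fJ0.
have BK : [set phi (e a) | a in A] `\` [set phi (e (sval i)) | i in J] `<=` K.
  move=> y [[a Aa <-] nF].
  exists (e a); split; [exact: eS | | by []].
  move=> i Ji; rewrite /e; case: eqP => // ia.
  by exfalso; apply: nF; exists i => //; rewrite ia.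
by move=> y /(gen_sub _ _ _ Ksg BK) /KU.
Qed.

Theorem corollary5p6 (G : topologicalZmodType) :
  hausdorff_space G ->
  (forall a : G, discrete_subspace (cyclic_subgroup a)) ->
  ((exists A : set G, infinite_set A /\ abs_cauchy_summable A) <->
   (exists A : set G, [/\ infinite_set A, A `<=` ~` [set 0] &
                          contains_top_iso_copy_of_S_A A])).
Proof.
move=> _ D; split; [exact: dirA | exact: dirB].
Qed.
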